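(* Let $G$ be a locally compact group. Then the Braconnier modular function $\mathrm{mod}_{\mathbb R\times G}:\mathrm{Aut}(\mathbb R\times G)\to(0,\infty)$ is an open map.
   Context: $\mathrm{Aut}(H)$ is the group of bicontinuous automorphisms of a locally compact group $H$ with the Braconnier topology, whose neighbourhood basis at $\mathrm{id}_H$ is given by $\mathcal N(K,U)=\{\alpha:\alpha(x)x^{-1}\in U,\ \alpha^{-1}(x)x^{-1}\in U\ \forall x\in K\}$, $K$ compact, $U$ an identity neighbourhood. The Braconnier modular function is defined by $\mu(\alpha(S))=\mathrm{mod}_H(\alpha)\mu(S)$ for a left Haar measure $\mu$ and Borel sets $S$; it is a continuous homomorphism into the multiplicative group $(0,\infty)$. *)

(* Defs.v *)
From HB Require Import structures.
From mathcomp Require Import all_boot all_order all_algebra.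
From mathcomp Require Import all_classical all_reals all_analysis.
Set Implicit Arguments. Unset Strict Implicit. Unset Printing Implicit Defensive.
Import Order.TTheory GRing.Theory Num.Theory.
Import numFieldNormedType.Exports.
Local Open Scope classical_set_scope.
Local Open Scope ring_scope.

Definition is_lc_group (G : ptopologicalType)
    (mul : G -> G -> G) (inv : G -> G) (one : G) : Prop :=
  (forall x y z, mul x (mul y z) = mul (mul x y) z) /\
  (forall x, mul one x = x /\ mul x one = x) /\
  (forall x, mul (inv x) x = one /\ mul x (inv x) = one) /\
  continuous (fun p : G * G => mul p.1 p.2) /\ continuous inv /\
  hausdorff_space G /\
  (forall x : G, exists K : set G, compact K /\ nbhs x K).

Section Product.
Variables (R : realType) (G : ptopologicalType).
Variables (mul : G -> G -> G) (inv : G -> G) (one : G).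

Definition pmul (p q : R * G) : R * G := (p.1 + q.1, mul p.2 q.2).
Definition pinv (p : R * G) : R * G := (- p.1, inv p.2).
Definition pone : R * G := (0, one).

Definition pborel : set (set (R * G)) := <<s [set U : set (R * G) | open U] >>.

Definition pborelType := g_sigma_algebraType [set U : set (R * G) | open U].

Definition is_aut (a : R * G -> R * G) : Prop :=
  (forall x y, a (pmul x y) = pmul (a x) (a y)) /\
  exists b : R * G -> R * G,
    [/\ cancel a b, cancel b a, continuous a & continuous b].

(* Membership in the basic identity neighbourhood N(K,U) of Aut(R x G). *)
Definition in_N (K U : set (R * G)) (a : R * G -> R * G) : Prop :=
  exists b : R * G -> R * G,
    [/\ cancel a b, cancel b a &
        forall x, K x -> U (pmul (a x) (pinv x)) /\ U (pmul (b x) (pinv x))].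

(* Open sets of Aut(R x G) for the Braconnier topology: the group topology
   whose neighbourhood basis at the identity is given by the N(K,U). *)
Definition braconnier_open (A : set (R * G -> R * G)) : Prop :=
  A `<=` is_aut /\
  forall a, A a -> exists (K U : set (R * G)),
    [/\ compact K, nbhs pone U &
        forall c, is_aut c -> in_N K U c -> A (a \o c)].

Definition left_haar (mu : {measure set pborelType -> \bar R}) : Prop :=
  [/\ (forall (x : R * G) (S : set (R * G)), pborel S ->
         mu (pmul x @` S) = mu S),
      (forall K : set (R * G), compact K -> (mu K < +oo)%E),
      (forall U : set (R * G), open U -> U !=set0 -> (0 < mu U)%E),
      (forall S : set (R * G), pborel S ->
         mu S = ereal_inf [set mu U | U in [set U : set (R * G) | open U /\ S `<=` U]]) &
      (forall U : set (R * G), open U ->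
         mu U = ereal_sup [set mu K | K in [set K : set (R * G) | compact K /\ K `<=` U]])].

Definition is_braconnier_mod (mu : {measure set pborelType -> \bar R})
    (modf : (R * G -> R * G) -> R) : Prop :=
  forall a, is_aut a ->
    0 < modf a /\
    forall S : set (R * G), pborel S -> mu (a @` S) = ((modf a)%:E * mu S)%E.

End Product.

(* Main.v *)
Set Warnings "-all".
Require Import Defs.
From HB Require Import structures.
From mathcomp Require Import all_boot all_order all_algebra.
From mathcomp Require Import all_classical all_reals all_analysis.
From mathcomp Require Import ring lra.
Set Implicit Arguments. Unset Strict Implicit. Unset Printing Implicit Defensive.
Import Order.TTheory GRing.Theory Num.Theory.
Import numFieldNormedType.Exports.
Local Open Scope classical_set_scope.
Local Open Scope ring_scope.
Lemma cauchy_mono (R : realType) (F : R -> R) :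
  (forall s t, 0 <= s -> 0 <= t -> F (s + t) = F s + F t) ->
  (forall s t, 0 <= s -> s <= t -> F s <= F t) ->
  forall t, 0 <= t -> F t = t * F 1.
Proof.
move=> Fadd Fmono t t0.
have F0 : F 0 = 0 by have := Fadd 0 0 (lexx _) (lexx _); rewrite addr0; lra.
have Fnat : forall (m : nat) x, 0 <= x -> F (m%:R * x) = m%:R * F x.
  move=> m x x0; elim: m => [|m IH]; first by rewrite !mul0r F0.
  rewrite -addn1 natrD !mulrDl !mul1r Fadd ?IH //; exact: mulr_ge0.
have F1 : 0 <= F 1 by rewrite -F0; apply: Fmono.
have key : forall n : nat, (0 < n)%N ->
    n%:R * (F t - t * F 1) <= F 1 /\ n%:R * (t * F 1 - F t) <= F 1.
  move=> n n0.
  have N0 : 0 < n%:R :> R by rewrite ltr0n.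
  pose u : R := (n%:R)^-1.
  have u0 : 0 <= u by rewrite invr_ge0 ltW.
  have Nu : n%:R * u = 1 by rewrite mulfV // gt_eqF.
  have NFu : n%:R * F u = F 1 by rewrite -Fnat // Nu.
  pose k := Num.Def.trunc (n%:R * t).
  have k1 : k%:R <= n%:R * t by rewrite truncn_le mulr_ge0 // ltW.
  have k2 : n%:R * t < k.+1%:R by exact: truncnS_gt.
  have A1 : F (k%:R * u) <= F t.
    apply: Fmono; first exact: mulr_ge0.
    by rewrite -(ler_pM2l N0) mulrCA Nu mulr1.
  have A2 : F t <= F (k.+1%:R * u).
    apply: Fmono => //.
    by rewrite -(ler_pM2l N0) mulrCA Nu mulr1 ltW.
  rewrite !Fnat // in A1 A2.
  have B1 : k%:R * F 1 <= n%:R * F t.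
    by rewrite -NFu mulrCA ler_pM2l.
  have B2 : n%:R * F t <= k.+1%:R * F 1.
    by rewrite -NFu mulrCA ler_pM2l.
  rewrite -natr1 in k2 B2.
  split; nra.
apply/eqP; rewrite -subr_eq0; apply/eqP.
set d := F t - t * F 1.
have : `|d| = 0.
  apply/eqP; rewrite eq_le normr_ge0 andbT; apply/negP => /negP; rewrite -ltNge => dpos.
  set n := (Num.Def.trunc (F 1 / `|d|)).+1.
  have := truncnS_gt (F 1 / `|d|); rewrite -/n ltr_pdivrMr // => H.
  have [H1 H2] := key n isT.
  move: H.
  have [dge|dlt] := lerP 0 d.
    rewrite ger0_norm // => H; rewrite ger0_norm // in dpos; rewrite /d in H; lra.
  by rewrite ltr0_norm // => H; rewrite /d in H dlt; lra.
by move/normr0_eq0.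
Qed.
Lemma cont_fst (R : realType) (G : ptopologicalType) : continuous (@fst R G).
Proof. move=> x; exact: cvg_fst. Qed.
Lemma cont_snd (R : realType) (G : ptopologicalType) : continuous (@snd R G).
Proof. move=> x; exact: cvg_snd. Qed.

Lemma pb_open (R : realType) (G : ptopologicalType) (A : set (R * G)) :
  open A -> @measurable _ (pborelType R G) A.
Proof. by move=> oA; apply: sub_sigma_algebra. Qed.

Lemma pb_closed (R : realType) (G : ptopologicalType) (A : set (R * G)) :
  closed A -> @measurable _ (pborelType R G) A.
Proof.
move=> cA; rewrite -(setCK A); apply: measurableC; apply: pb_open.
by rewrite openC.
Qed.

Definition strip (R : realType) (G : Type) (K : set G) (t : R) : set (R * G) :=
  [set p | 0 <= p.1 /\ p.1 < t /\ K p.2].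

Lemma strip_meas (R : realType) (G : ptopologicalType) (K : set G) (t : R) :
  closed K -> @measurable _ (pborelType R G) (strip K t).
Proof.
move=> cK.
have -> : strip K t = (fst @^-1` [set x : R | 0 <= x] `&` snd @^-1` K) `&`
                       fst @^-1` [set x : R | x < t].
  by apply/seteqP; split => [[x y] /= [? [? ?]]|[x y] /= [[? ?] ?]].
apply: measurableI; [apply: pb_closed; apply: closedI|apply: pb_open].
- by apply: preimage_closed; [move=> *; apply: cont_fst|apply: closed_ge].
- by apply: preimage_closed => // x _; exact: (@cont_snd R G x).
- by apply: open_comp; [move=> *; apply: cont_fst|apply: open_lt].
Qed.

Lemma box_meas (R : realType) (G : ptopologicalType) (K : set G) (t : R) :
  closed K -> @measurable _ (pborelType R G) (`[0, t]%classic `*` K).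
Proof.
move=> cK.
have -> : `[0, t]%classic `*` K = (fst @^-1` [set x : R | 0 <= x] `&` snd @^-1` K) `&`
                       fst @^-1` [set x : R | x <= t].
  apply/seteqP; split => -[x y] /=.
    by case; rewrite /= in_itv /= => /andP[? ?] ?.
  by case=> -[? ?] ?; split => //=; rewrite in_itv /=; apply/andP.
apply: measurableI; apply: pb_closed; first apply: closedI.
- by apply: preimage_closed; [move=> *; apply: cont_fst|apply: closed_ge].
- by apply: preimage_closed => // x _; exact: (@cont_snd R G x).
- by apply: preimage_closed; [move=> *; apply: cont_fst|apply: closed_le].
Qed.

Lemma strip_linear (R : realType) (G : ptopologicalType) (mul : G -> G -> G) (one : G) (K : set G)
  (mu : {measure set (pborelType R G) -> \bar R}) :
  hausdorff_space G -> compact K -> nbhs one K ->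
  (forall x, mul one x = x) ->
  (forall (x : R * G) (S : set (R * G)), pborel S -> mu (pmul mul x @` S) = mu S) ->
  (forall C : set (R * G), compact C -> (mu C < +oo)%E) ->
  (forall U : set (R * G), open U -> U !=set0 -> (0 < mu U)%E) ->
  exists2 r : R, 0 < r & forall t, 0 <= t -> mu (strip K t) = (t * r)%:E.
Proof.
move=> hG cpK nK mul1 hinv hfin hpos.
have cK := compact_closed hG cpK.
have mS t : @measurable _ (pborelType R G) (strip K t) by exact: strip_meas.
have fin t : 0 <= t -> mu (strip K t) \is a fin_num.
  move=> t0; rewrite ge0_fin_numE ?measure_ge0 //.
  apply: (le_lt_trans (y := mu (`[0, t]%classic `*` K))).
    apply: le_measure; rewrite ?inE //; first exact: box_meas.
    by move=> [x y] /= [? [? ?]]; split => //=; rewrite in_itv /=; apply/andP; split => //; apply: ltW.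
  by apply: hfin; apply: compact_setX => //; apply: segment_compact.
have add s t : 0 <= s -> 0 <= t ->
    mu (strip K (s + t)) = (mu (strip K s) + mu (strip K t))%E.
  move=> s0 t0.
  have E : pmul mul (s, one) @` strip K t = strip K (s + t) `\` strip K s.
    apply/seteqP; split.
      move=> _ [[x y] /= [x0 [xt Ky]] <-]; rewrite /pmul /= mul1.
      rewrite /= in x0 xt Ky.
      split; first by split => //=; [lra|split => //; lra].
      by rewrite /strip /=; case=> _ [xs _]; lra.
    move=> [x y] /= [[x0 [xt Ky]] nS].
    rewrite /= in x0 xt Ky.
    exists (x - s, y).
      rewrite /strip /=; split; last by split => //; lra.
      rewrite subr_ge0 leNgt; apply/negP => xs.
      by apply: nS; rewrite /strip /=; split => //; split.
    by rewrite /pmul /= mul1 addrC subrK.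
  have U : strip K (s + t) = strip K s `|` (strip K (s + t) `\` strip K s).
    rewrite setDUK //.
    by move=> [x y] /= [? [? ?]]; split => //; split => //; lra.
  rewrite U measureU //.
  - by rewrite -E; have h := hinv (s, one) (strip K t) (mS t); rewrite -h.
  - exact: measurableD.
  - by rewrite setDIK.
have pos : (0 < mu (strip K 1))%E.
  pose O := (fst @^-1` [set x : R | 0 < x] `&` snd @^-1` K°) `&` fst @^-1` [set x : R | x < 1].
  have oO : open O.
    apply: openI; first apply: openI.
    - by apply: open_comp; [move=> *; apply: cont_fst|apply: open_gt].
    - by apply: open_comp; [move=> x _; exact: (@cont_snd R G x)|apply: open_interior].
    - by apply: open_comp; [move=> *; apply: cont_fst|apply: open_lt].
  apply: (lt_le_trans (hpos O oO _)).
    exists (2^-1, one); rewrite /O /=; split; last by lra.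
    by split; [lra|exact: nK].
  apply: le_measure; rewrite ?inE //; first exact: pb_open.
  move=> [x y] /= [[x0 Ky] x1]; split; first exact: ltW.
  by split => //; exact: interior_subset.
pose F t := fine (mu (strip K t)).
have hF := @cauchy_mono R F.
exists (F 1).
  by rewrite /F fine_gt0 // pos /= ltey_eq fin.
move=> t t0; rewrite -hF //.
- by rewrite /F fineK ?fin.
- by move=> s u s0 u0; rewrite /F add // fineD ?fin.
- move=> s u s0 su; rewrite /F fine_le ?fin //; try exact: (le_trans s0).
  apply: le_measure; rewrite ?inE //.
  by move=> [x y] /= [? [? ?]]; split => //; split => //; exact: (lt_le_trans _ su).
Qed.
Lemma cont_scale (R : realType) (G : ptopologicalType) (t : R) :
  continuous (fun p : R * G => (t * p.1, p.2)).
Proof.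
move=> x; apply: (@cvg_pair _ _ _ (nbhs x) (nbhs (t * x.1)) (nbhs x.2)).
  by apply: cvgMr; exact: cont_fst.
exact: cont_snd.
Qed.
Lemma bnd (R : realType) (G : ptopologicalType) (K : set (R * G)) : compact K ->
  exists M : R, forall p, K p -> `|p.1| <= M.
Proof.
move=> cK.
have cK' : compact (fst @` K).
  by apply: continuous_compact => //; apply: continuous_subspaceT; exact: cont_fst.
have [M [_ HM]] := compact_bounded cK'.
exists (M + 1) => p Kp; apply: (HM (M + 1)); first by rewrite ltrDl.
by exists p.
Qed.
Lemma pt (R : realType) (G : ptopologicalType) (one : G) (U : set (R * G)) :
  nbhs (0, one) U -> exists2 e : R, 0 < e & forall s, `|s| < e -> U (s, one).
Proof.
move=> nU.
have : (fun s : R => (s, one)) @ (0 : R) --> (0, one).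
  by apply: (@cvg_pair _ _ _ (nbhs (0:R)) (nbhs (0:R)) (nbhs one)); [exact: cvg_id|exact: cvg_cst].
move=> /(_ U nU) /nbhs_ballP [e e0 he]; exists e => // s hs.
apply: he; rewrite -ball_normE /= sub0r normrN //.
Qed.

Theorem lemma2p7 (R : realType) (G : ptopologicalType)
    (mul : G -> G -> G) (inv : G -> G) (one : G)
    (hG : is_lc_group mul inv one)
    (mu : {measure set (pborelType R G) -> \bar R})
    (hmu : left_haar mul mu)
    (modf : (R * G -> R * G) -> R)
    (hmod : is_braconnier_mod mul mu modf) :
  forall A : set (R * G -> R * G),
    braconnier_open mul inv one A -> open (modf @` A).
Proof.
have [_ [unit [invs [_ [_ [hausG lc]]]]]] := hG.
have [hinv hfin hpos _ _] := hmu.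
have [K0 [cK0 nK0]] := lc one.
have [r r0 hlin] := strip_linear hausG cK0 nK0 (fun x => (unit x).1) hinv hfin hpos.
move=> A [Aaut hA]; rewrite openE => _ [a Aa <-].
have [K [U [cK nU hc]]] := hA a Aa.
have [B1 hB1] := bnd cK.
pose B := Num.max B1 0.
have hB : forall p, K p -> `|p.1| <= B by move=> p Kp; rewrite /B le_max hB1.
have [e e0 he] := pt nU.
have B0 : 0 <= B by rewrite /B le_max lexx orbT.
pose d := Num.min (2^-1) (e / (2 * (B + 1))).
have d0 : 0 < d by rewrite lt_min; apply/andP; split; [lra|apply: divr_gt0 => //; lra].
have y0 : 0 < modf a := (hmod a (Aaut a Aa)).1.
rewrite /interior /=; apply/nbhs_ballP; exists (d * modf a); first exact: mulr_gt0.
move=> z; rewrite -ball_normE /= => hz.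
pose t := z / modf a.
have tE : t * modf a = z by rewrite /t divfK // gt_eqF.
have ht1 : `|t - 1| < d.
  have : `|t - 1| * modf a < d * modf a.
    by rewrite -(ger0_norm (ltW y0)) -normrM mulrBl tE mul1r distrC (ger0_norm (ltW y0)).
  by rewrite ltr_pM2r.
have hd1 : d <= 2^-1 by rewrite /d ge_min lexx.
have hd2 : d <= e / (2 * (B + 1)) by rewrite /d ge_min lexx orbT.
have [ht1a ht1b] : - d < t - 1 /\ t - 1 < d by move: ht1; rewrite ltr_norml => /andP.
have t0 : 0 < t by lra.
pose q := e / (2 * (B + 1)).
have hq : 2 * q * (B + 1) = e by rewrite /q; field; lra.
have q0 : 0 < q by rewrite /q divr_gt0 //; lra.
have key : forall v x : R, `|v| <= 2 * d -> `|x| <= B -> `|v * x| < e.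
  move=> v x hv hx; rewrite normrM.
  have h1 : `|v| * `|x| <= `|v| * B by rewrite ler_wpM2l.
  have h2 : `|v| * B <= 2 * d * B by rewrite ler_wpM2r.
  have h3 : 2 * d * B <= 2 * q * B by rewrite ler_wpM2r // ler_wpM2l.
  lra.
have kt : `|t - 1| <= 2 * d by lra.
have kti : `|t^-1 - 1| <= 2 * d.
  have E : `|t^-1 - 1| * t = `|t - 1|.
    rewrite -[X in _ * X](gtr0_norm t0) -normrM mulrBl mulVf ?gt_eqF // mul1r.
    by rewrite distrC.
  have w0 := normr_ge0 (t^-1 - 1).
  have hw : `|t^-1 - 1| * (t - 2^-1) >= 0 by apply: mulr_ge0 => //; lra.
  nra.
pose c := fun p : R * G => (t * p.1, p.2).
pose ci := fun p : R * G => (t^-1 * p.1, p.2).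
have cc : cancel c ci by move=> [x y]; rewrite /c /ci /= mulrA mulVf ?mul1r // gt_eqF.
have cic : cancel ci c by move=> [x y]; rewrite /c /ci /= mulrA mulfV ?mul1r // gt_eqF.
have chom : forall x y, c (pmul mul x y) = pmul mul (c x) (c y).
  by move=> [? ?] [? ?]; rewrite /c /pmul /= mulrDr.
have caut : is_aut mul c.
  split => //; exists ci; split => //; [exact: cont_scale|exact: cont_scale].
have [ahom [b [ab ba ca cb]]] := Aaut a Aa.
have autac : is_aut mul (a \o c).
  split; first by move=> x y; rewrite /= chom ahom.
  exists (ci \o b); split.
  - by move=> x; rewrite /= ab cc.
  - by move=> x; rewrite /= cic ba.
  - by move=> x; apply: continuous_comp; [exact: cont_scale|exact: ca].
  - by move=> x; apply: continuous_comp; [exact: cb|exact: cont_scale].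
have inN : in_N mul inv K U c.
  exists ci; split => // x Kx.
  rewrite /pmul /pinv /c /ci /= (invs x.2).2; split; apply: he.
  - by rewrite -{2}(mul1r x.1) -mulrBl; apply: key => //; exact: hB.
  - by rewrite -{2}(mul1r x.1) -mulrBl; apply: key => //; exact: hB.
have Aac := hc c caut inN.
exists (a \o c) => //.
have cK0c := compact_closed hausG cK0.
have h1 := (hmod _ autac).2 (strip K0 1) (strip_meas _ cK0c).
have h2 := (hmod a (Aaut a Aa)).2 (strip K0 t) (strip_meas _ cK0c).
have cimg : c @` strip K0 1 = strip K0 t.
  apply/seteqP; split.
    move=> _ [[x y] [/= x0 [x1 Ky]] <-]; rewrite /strip /c /=.
    split; first by rewrite mulr_ge0 // ltW.
    by split => //; nra.
  move=> [x y] [/= x0 [xt Ky]]; exists (t^-1 * x, y).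
    rewrite /strip /=; split; first by rewrite mulr_ge0 // invr_ge0 ltW.
    by split => //; rewrite mulrC ltr_pdivrMr // mul1r.
  by rewrite /c /= mulrA mulfV ?mul1r // gt_eqF.
have img : (a \o c) @` strip K0 1 = a @` strip K0 t by rewrite -image_comp cimg.
rewrite img h2 !hlin ?ltW // ?mul1r in h1.
move: h1; rewrite -!EFinM => -[] /(congr1 (fun v => v / r)).
rewrite mulrA !mulfK ?gt_eqF // => <-.
by rewrite mulrC tE.
Qed.
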